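(* Let $n\ge2$ and $\sigma\ge0$, and let $\mathbf p_{n,\sigma}$ be a unit eigenvector of $\mathbf A_\sigma^{-1}\mathbf B$ associated with its unique negative eigenvalue. (i) For $\sigma=0$ we have $\mathbf p_{n,0}=\pm(0,\dots,0,1)^T$. (ii) For $\sigma>0$ all entries of $\mathbf p_{n,\sigma}$ are nonzero and have the same sign. More precisely, $p_{k,n,\sigma}=b_1(r^k+r^{n-k})$ for $k=1,\dots,n$, with some $r>1$ and $b_1\ne0$ depending on $\sigma$. (iii) Consequently, for any $\sigma,\sigma'\ge0$ we have $\mathbf p_{n,\sigma}\cdot\mathbf p_{n,\sigma'}\neq0$.
   Context: Let $\mathbf L\in\mathbb R^{n\times n}$ be the periodic discrete one-dimensional Laplacian, i.e. $(\mathbf L\mathbf x)_i=x_{i-1}-2x_i+x_{i+1}$ with indices taken modulo $n$. For $\sigma\ge 0$ set $\mathbf A_\sigma=\mathbf I-\sigma\mathbf L$. Let $\mathbf B=\mathrm{diag}(1,\dots,1,-1)\in\mathbb R^{n\times n}$. The matrix $\mathbf A_\sigma^{-1}\mathbf B$ is diagonalizable with real eigenvalues, exactly one of which is negative. *)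

(* Defs.v *)
From HB Require Import structures.
From mathcomp Require Import all_boot all_order all_algebra.
Set Implicit Arguments. Unset Strict Implicit. Unset Printing Implicit Defensive.
Import Order.TTheory GRing.Theory Num.Theory.
Local Open Scope ring_scope.

(* Periodic discrete 1D Laplacian on indices 0..n-1 (taken mod n):
   (L x)_i = x_{i-1} - 2 x_i + x_{i+1}. *)
Definition lapl (R : rcfType) (n : nat) : 'M[R]_n :=
  \matrix_(i < n, j < n)
    ((nat_of_ord j == (i.+1 %% n)%N)%:R + (nat_of_ord j == ((i + n).-1 %% n)%N)%:R
     - 2 * (i == j)%:R).

Definition Amat (R : rcfType) (n : nat) (sigma : R) : 'M[R]_n :=
  1%:M - sigma *: lapl R n.

Definition Bmat (R : rcfType) (n : nat) : 'M[R]_n :=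
  \matrix_(i < n, j < n)
    (if i == j then (if nat_of_ord i == n.-1 then -1 else 1) else 0).

Definition neg_unit_eigvec (R : rcfType) (n : nat) (sigma : R) (p : 'cV[R]_n) : Prop :=
  exists lambda : R, lambda < 0 /\
    (invmx (Amat n sigma) *m Bmat R n) *m p = lambda *: p /\
    \sum_(i < n) p i 0 ^+ 2 = 1.

Definition e_last (R : rcfType) (n : nat) : 'cV[R]_n :=
  \col_(i < n) (nat_of_ord i == n.-1)%:R.

Definition dotv (R : rcfType) (n : nat) (p q : 'cV[R]_n) : R :=
  \sum_(i < n) p i 0 * q i 0.

(* Main.v *)
Require Import Defs.
From HB Require Import structures.
From mathcomp Require Import all_boot all_order all_algebra.
From mathcomp Require Import ring lra zify.
Import Order.TTheory GRing.Theory Num.Theory.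
Local Open Scope ring_scope.
Set Implicit Arguments. Unset Strict Implicit. Unset Printing Implicit Defensive.

Section H.
Variable R : rcfType.

Definition ordx n (x : 'cV[R]_n) (k : nat) : R :=
  \sum_(j < n) (nat_of_ord j == (k %% n)%N)%:R * x j 0.

Lemma ordxE n (x : 'cV[R]_n) k (h : (k %% n < n)%N) : ordx x k = x (Ordinal h) 0.
Proof.
rewrite /ordx (bigD1 (Ordinal h)) //= eqxx mul1r big1 ?addr0 // => j hj.
case: eqP => [e|_]; last by rewrite mul0r.
by exfalso; move/eqP: hj; apply; apply: val_inj.
Qed.

Lemma ordx_ord n (x : 'cV[R]_n) (i : 'I_n) : ordx x i = x i 0.
Proof.
have h : (i %% n < n)%N by rewrite modn_small.
rewrite (ordxE x h); congr (x _ 0); apply: val_inj => /=; by rewrite modn_small.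
Qed.

Lemma ordx_mod n (x : 'cV[R]_n) k k' : (k %% n = k' %% n)%N -> ordx x k = ordx x k'.
Proof. by rewrite /ordx => ->. Qed.

Lemma laplE n (x : 'cV[R]_n) (i : 'I_n) :
  (lapl R n *m x) i 0 = ordx x i.+1 + ordx x (i + n).-1 - 2 * x i 0.
Proof.
rewrite !mxE.
under eq_bigr => j _ do rewrite !mxE mulrBl mulrDl.
rewrite sumrB big_split /=; congr (_ + _ - _).
rewrite (bigD1 i) //= eqxx mulr1 big1 ?addr0 // => j hj.
by rewrite eq_sym (negbTE hj) mulr0 mul0r.
Qed.

Lemma mxBE m n (A B : 'M[R]_(m,n)) i j : (A - B) i j = A i j - B i j.
Proof. by rewrite !mxE. Qed.
Lemma mxZE m n (a : R) (A : 'M[R]_(m,n)) i j : (a *: A) i j = a * A i j.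
Proof. by rewrite !mxE. Qed.

Lemma AmatE n s (x : 'cV[R]_n) (i : 'I_n) :
  (Amat n s *m x) i 0 = x i 0 - s * (ordx x i.+1 + ordx x (i + n).-1 - 2 * x i 0).
Proof.
rewrite /Amat mulmxBl mul1mx -scalemxAl. by rewrite mxBE mxZE laplE.
Qed.

Lemma BmatE n (x : 'cV[R]_n) (i : 'I_n) :
  (Bmat R n *m x) i 0 = (if nat_of_ord i == n.-1 then -1 else 1) * x i 0.
Proof.
rewrite !mxE (bigD1 i) //= !mxE eqxx big1 ?addr0 // => j hj.
by rewrite !mxE eq_sym (negbTE hj) mul0r.
Qed.


Lemma Aunit n (s : R) : (0 < n)%N -> 0 <= s -> Amat n s \in unitmx.
Proof.
move=> n0 s0; rewrite -unitmx_tr -row_free_unit; apply: inj_row_free => v hv.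
have hx : Amat n s *m v^T = 0 by rewrite -(trmxK (Amat n s)) -trmx_mul hv trmx0.
set x := v^T in hx.
have [im _ hmax] := @arg_maxP _ _ _ (Ordinal n0) xpredT (fun i => `|x i 0|) isT.
have hb : forall k, `|ordx x k| <= `|x im 0|.
  move=> k; have h : (k %% n < n)%N by rewrite ltn_pmod.
  by rewrite (ordxE x h); apply: hmax.
have e := AmatE s x im; rewrite hx mxE in e.
set a := ordx x im.+1 in e; set b := ordx x (im + n).-1 in e.
have e2 : (1 + 2 * s) * x im 0 = s * (a + b) by lra.
have e3 : (1 + 2 * s) * `|x im 0| = s * `|a + b|.
  have h12 : 0 <= 1 + 2 * s by lra.
  by rewrite -[in LHS](ger0_norm h12) -normrM e2 normrM (ger0_norm s0).
have i1 : s * `|a + b| <= s * (2 * `|x im 0|).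
  apply: ler_wpM2l => //; apply: le_trans (ler_normD a b) _.
  by have := hb im.+1; have := hb (im + n).-1; rewrite -/a -/b; lra.
have hm : `|x im 0| = 0.
  by apply/eqP; rewrite eq_le normr_ge0 andbT; nra.
suff hx0 : x = 0 by rewrite -(trmxK v) -/x hx0 trmx0.
apply/matrixP => j i; rewrite [RHS]mxE ord1; apply/eqP; rewrite -normr_eq0 eq_le normr_ge0 andbT.
rewrite -hm; by have := hmax j isT.
Qed.

Fixpoint sq (c : R) (m : nat) : R :=
  match m with 0 => 0 | 1 => 1 | (m'.+1 as k).+1 => c * sq c k - sq c m' end.

Lemma sqS c m : sq c m.+2 = c * sq c m.+1 - sq c m.
Proof. by []. Qed.

Lemma sq_pos c m : 2 < c -> 1 <= sq c m.+1 - sq c m /\ 0 <= sq c m.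
Proof.
move=> c2; elim: m => [|m [h1 h2]] /=; first by split; lra.
have h3 : 1 <= sq c m.+1 by lra.
have h4 : 0 <= (c - 2) * sq c m.+1 by apply: mulr_ge0; lra.
case: m h1 h2 h3 h4 => [|m] /= h1 h2 h3 h4; split; lra.
Qed.

Lemma rec_zero (w : nat -> R) c N : 2 < c -> (0 < N)%N -> w 0%N = 0 -> w N = 0 ->
  (forall m, (1 <= m)%N -> (m < N)%N -> w m.+1 = c * w m - w m.-1) ->
  forall m, (m <= N)%N -> w m = 0.
Proof.
move=> c2 N0 w0 wN rec.
have H : forall m, (m.+1 <= N)%N -> w m = w 1%N * sq c m /\ w m.+1 = w 1%N * sq c m.+1.
  elim => [|m IH] hm; first by rewrite /= w0 mulr0 mulr1.
  have [h1 h2] := IH (ltnW hm); split => //.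
  rewrite rec // sqS; change (m.+1.-1) with m; rewrite h1 h2; ring.
have hN : w N = w 1%N * sq c N.
  have hh : (N.-1.+1 <= N)%N by rewrite prednK.
  by have [_ ] := H N.-1 hh; rewrite prednK.
have [s1 s2] := sq_pos N.-1 c2; rewrite prednK // in s1.
have w1 : w 1%N = 0.
  have : w 1%N * sq c N = 0 by rewrite -hN.
  by move/eqP; rewrite mulf_eq0 => /orP [/eqP //| /eqP h]; lra.
move=> m; rewrite leq_eqVlt => /orP [/eqP -> //|hm].
by have [-> _] := H m hm; rewrite w1 mul0r.
Qed.

Lemma eig_rows n (s : R) (p : 'cV[R]_n) l : (0 < n)%N -> 0 <= s ->
  (invmx (Amat n s) *m Bmat R n) *m p = l *: p -> forall i : 'I_n,
  (if nat_of_ord i == n.-1 then -1 else 1) * p i 0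
   = l * (p i 0 - s * (ordx p i.+1 + ordx p (i + n).-1 - 2 * p i 0)).
Proof.
move=> n0 s0 E i.
have hu := Aunit n0 s0.
have E2 : Bmat R n *m p = l *: (Amat n s *m p).
  by rewrite scalemxAr -E -mulmxA (mulKVmx hu).
by move/matrixP: E2 => /(_ i 0); rewrite BmatE mxZE AmatE.
Qed.

Lemma partii n (hn : (2 <= n)%N) (s : R) (p : 'cV[R]_n) : 0 < s -> neg_unit_eigvec s p ->
  exists r a : R, 1 < r /\ a != 0 /\
    (forall i : 'I_n, p i 0 = a * (r ^+ i.+1 + r ^+ (n - i.+1))).
Proof.
move=> s0 [l [l0 [E S]]].
have n0 : (0 < n)%N by apply: leq_trans hn.
have rows := eig_rows n0 (ltW s0) E.
pose y m := ordx p (m + n).-1.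
pose c := (l * (1 + 2 * s) - 1) / (s * l).
have sl0 : s * l < 0 by rewrite pmulr_rlt0.
have slne : s * l != 0 by rewrite lt_eqF.
have hc : c * (s * l) = l * (1 + 2 * s) - 1 by rewrite /c mulfVK.
have c2 : 2 < c by nra.
have yrec : forall m, (1 <= m)%N -> (m < n)%N -> y m.+1 = c * y m - y m.-1.
  move=> m m1 mn.
  have hi : (m.-1 < n)%N by rewrite (leq_ltn_trans (leq_pred m)).
  pose i := Ordinal hi.
  have e := rows i; rewrite /= (_ : (m.-1 == n.-1) = false) ?mul1r in e; last first.
    by apply/negbTE/eqP; lia.
  have ym : y m = p i 0.
    rewrite -ordx_ord /y /=; apply: ordx_mod.
    by rewrite (_ : (m + n).-1 = m.-1 + n)%N ?modnDr //; lia.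
  have y1 : y m.+1 = ordx p m.-1.+1.
    by rewrite /y; apply: ordx_mod; rewrite (_ : (m.+1 + n).-1 = m.-1.+1 + n)%N ?modnDr //; lia.
  change (y m.-1) with (ordx p (m.-1 + n).-1); rewrite y1 ym.
  move: e => /=.
  set Y1 := ordx p m.-1.+1; set Y0 := ordx p (m.-1 + n).-1; set P := p i 0 => e.
  have h : s * l * (Y1 + Y0) = (l * (1 + 2 * s) - 1) * P by nra.
  have h2 : s * l * (Y1 + Y0 - c * P) = 0 by rewrite mulrBr h -hc; ring.
  move/eqP: h2; rewrite mulf_eq0 (negbTE slne) /= => /eqP h3; lra.
pose q := Num.sqrt (c ^+ 2 - 4).
have q0 : 0 <= q := sqrtr_ge0 _.
have qq : q ^+ 2 = c ^+ 2 - 4 by rewrite sqr_sqrtr //; nra.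
pose r := (c + q) / 2.
have r1 : 1 < r by rewrite /r; lra.
have hr : c * r = r ^+ 2 + 1 by rewrite /r; nra.
clearbody r.
pose u m := r ^+ m + r ^+ (n - m).
have urec : forall m, (1 <= m)%N -> (m < n)%N -> u m.+1 = c * u m - u m.-1.
  move=> m m1 mn; rewrite /u.
  case: m m1 mn => // k _ kn /=.
  set j := (n - k.+2)%N.
  have -> : (n - k.+1 = j.+1)%N by rewrite /j; lia.
  have -> : (n - k = j.+2)%N by rewrite /j; lia.
  rewrite !exprS mulrDr !mulrA hr; ring.
pose a := y 0%N / (1 + r ^+ n).
pose w m := y m - a * u m.
have rn : 0 < 1 + r ^+ n by (have : 0 < r ^+ n by apply: exprn_gt0; lra); lra.
have w0 : w 0%N = 0.
  rewrite /w /u subn0 expr0 addrC /a divfK; last by rewrite (gt_eqF rn).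
  by rewrite addNr.
have wn : w n = 0.
  rewrite /w /u subnn expr0 [r ^+ n + 1]addrC /a divfK; last by rewrite (gt_eqF rn).
  rewrite (_ : y n = y 0%N) ?subrr //.
  by rewrite /y; apply: ordx_mod; rewrite (_ : (n + n).-1 = (0 + n).-1 + n)%N ?modnDr //; lia.
have wrec : forall m, (1 <= m)%N -> (m < n)%N -> w m.+1 = c * w m - w m.-1.
  by move=> m m1 mn; rewrite /w yrec // urec //; ring.
have wz := rec_zero c2 n0 w0 wn wrec.
have pe : forall i : 'I_n, p i 0 = a * u i.+1.
  move=> i; have := wz i.+1 (ltn_ord i); rewrite /w => /eqP; rewrite subr_eq0 => /eqP <-.
  by rewrite /y -ordx_ord; apply: ordx_mod; rewrite addSn /= modnDr.
exists r, a; split => //; split.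
  apply/eqP => a0; move: S.
  have -> : \sum_(i < n) p i 0 ^+ 2 = 0 by apply: big1 => i _; rewrite pe a0 mul0r expr0n.
  by move/eqP; rewrite eq_sym oner_eq0.
by move=> i; rewrite pe.
Qed.

Lemma parti n (hn : (2 <= n)%N) (p : 'cV[R]_n) : neg_unit_eigvec 0 p ->
  p = e_last R n \/ p = - e_last R n.
Proof.
move=> [l [l0 [E S]]].
have n0 : (0 < n)%N by apply: leq_trans hn.
have rows := eig_rows n0 (lexx 0) E.
have hl : (n.-1 < n)%N by rewrite ltn_predL.
pose ln := Ordinal hl.
have z : forall i : 'I_n, nat_of_ord i != n.-1 -> p i 0 = 0.
  move=> i hi; have := rows i; rewrite (negbTE hi) mul1r !mul0r subr0 => e.
  have : (1 - l) * p i 0 = 0 by rewrite mulrBl mul1r -e subrr.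
  by move/eqP; rewrite mulf_eq0 => /orP [/eqP h|/eqP //]; lra.
have hS : p ln 0 ^+ 2 = 1.
  rewrite -S (bigD1 ln) //= big1 ?addr0 //.
  by move=> i hi; rewrite z ?expr0n //.
have : (p ln 0 == 1) || (p ln 0 == -1) by rewrite -sqrf_eq1 hS.
case/orP => /eqP h; [left|right]; apply/matrixP => i j; rewrite ord1 !mxE;
  (case: (eqVneq (nat_of_ord i) n.-1) => hi;
   [by rewrite (_ : i = ln) ?h //; apply: val_inj | by rewrite z // ?oppr0]).
Qed.

Lemma signdef n (hn : (2 <= n)%N) (s : R) (p : 'cV[R]_n) (hl : (n.-1 < n)%N) :
  0 <= s -> neg_unit_eigvec s p ->
  exists e : R, (forall i, 0 <= e * p i 0) /\ 0 < e * p (Ordinal hl) 0.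
Proof.
move=> s0 hp; case: (eqVneq s 0) => [sz|snz].
  move: hp; rewrite sz => /(parti hn) [->|->]; [exists 1|exists (-1)];
  split => [i|]; rewrite !mxE /=; rewrite ?eqxx; try case: (_ == _); rewrite /=; lra.
have sp : 0 < s by rewrite lt_def snz.
have [r [a [r1 [a0 pe]]]] := partii hn sp hp.
have up : forall i : 'I_n, 0 < r ^+ i.+1 + r ^+ (n - i.+1).
  move=> i; have h1 : 0 < r ^+ i.+1 by apply: exprn_gt0; lra.
  have h2 : 0 < r ^+ (n - i.+1) by apply: exprn_gt0; lra.
  lra.
have aa : 0 < a ^+ 2 by rewrite lt_def sqrf_eq0 a0 sqr_ge0.
exists a; split => [i|]; rewrite pe mulrA -expr2.
  by apply: mulr_ge0; [apply: ltW | apply: ltW; apply: up].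
by apply: mulr_gt0 => //; apply: up.
Qed.

End H.

Unset Implicit Arguments.

Theorem mainTheorem3 (R : rcfType) (n : nat) (hn : (2 <= n)%N) :
  (* (i) *)
  (forall p : 'cV[R]_n, @neg_unit_eigvec R n 0 p ->
     p = e_last R n \/ p = - e_last R n) /\
  (* (ii) *)
  (forall (sigma : R) (p : 'cV[R]_n), 0 < sigma -> @neg_unit_eigvec R n sigma p ->
     (forall i : 'I_n, p i 0 != 0) /\
     (forall i j : 'I_n, 0 < p i 0 * p j 0) /\
     (exists r b1 : R, 1 < r /\ b1 != 0 /\
        forall i : 'I_n, p i 0 = b1 * (r ^+ i.+1 + r ^+ (n - i.+1)))) /\
  (* (iii) *)
  (forall (sigma sigma' : R) (p p' : 'cV[R]_n), 0 <= sigma -> 0 <= sigma' ->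
     @neg_unit_eigvec R n sigma p -> @neg_unit_eigvec R n sigma' p' ->
     dotv p p' != 0).
Proof.
split; [|split].
- exact: parti.
- move=> s p s0 hp; have [r [a [r1 [a0 pe]]]] := partii hn s0 hp.
  have up : forall i : 'I_n, 0 < r ^+ i.+1 + r ^+ (n - i.+1).
    move=> i; have h1 : 0 < r ^+ i.+1 by apply: exprn_gt0; lra.
    have h2 : 0 < r ^+ (n - i.+1) by apply: exprn_gt0; lra.
    lra.
  have aa : 0 < a ^+ 2 by rewrite lt_def sqrf_eq0 a0 sqr_ge0.
  split; [|split].
  + by move=> i; rewrite pe mulf_neq0 // gt_eqF // up.
  + move=> i j; rewrite !pe mulrACA -expr2; apply: mulr_gt0 => //.
    by apply: mulr_gt0; apply: up.
  + by exists r, a.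
- move=> s s' p p' s0 s0' hp hp'.
  have hl : (n.-1 < n)%N by rewrite ltn_predL; apply: leq_trans hn.
  have [e [ep ep1]] := signdef hn hl s0 hp.
  have [e' [ep' ep1']] := signdef hn hl s0' hp'.
  have : 0 < e * e' * dotv p p'.
    rewrite /dotv mulr_sumr (bigD1 (Ordinal hl)) //=.
    have h1 : 0 < e * e' * (p (Ordinal hl) 0 * p' (Ordinal hl) 0).
      by rewrite mulrACA; apply: mulr_gt0.
    have h2 : 0 <= \sum_(i < n | i != Ordinal hl) e * e' * (p i 0 * p' i 0).
      by apply: sumr_ge0 => i _; rewrite mulrACA; apply: mulr_ge0.
    lra.
  by apply: contraTneq => ->; rewrite mulr0 ltxx.
Qed.
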